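(* Assume the MDP satisfies the low-rank assumption with parameter $d$. In the infinite-sample setting, run the evaluation algorithm with weight matrices $\rho_t = d_t^{\pi^\beta}$ for $t\in[H]$ and with the infinite-sample matrix estimation subroutine. Then the output $\widehat J$ satisfies \[ \big|\widehat J - J^{\pi^\theta}\big| \le 2H\sqrt{dSA}\,\sum_{t=1}^{H}\operatorname{Dis}\big(d_t^{\pi^\beta}, d_t^{\pi^\theta}\big). \]
   Context: MDP: finite state space $\mathcal S$ with $S=|\mathcal S|$, finite action space $\mathcal A$ with $A=|\mathcal A|$, horizon $H$, transition kernels $P_t(\cdot\mid s,a)\in\Delta(\mathcal S)$, rewards $r_t:\mathcal S\times\mathcal A\to[0,1]$ for $t\in[H]$, initial state distribution $\mu_1$. A policy is $\pi=\{\pi_t:\mathcal S\to\Delta(\mathcal A)\}_{t\in[H]}$; under $\pi$, $s_1\sim\mu_1$, $a_t\sim\pi_t(\cdot\mid s_t)$, $s_{t+1}\sim P_t(\cdot\mid s_t,a_t)$. Let $d_t^\pi(s,a)=\Pr_\pi(s_t=s,a_t=a)$ and $J^\pi=\mathbb E_\pi[\sum_{t=1}^H r_t(s_t,a_t)]$. Functions on $\mathcal S\times\mathcal A$ (including distributions on $\mathcal S\times\mathcal A$) are viewed as real $S\times A$ matrices. $\pi^\theta$ is the target policy, $\pi^\beta$ the behavior policy. Low-rank assumption with parameter $d$: with $d'=\lfloor d/2\rfloor$, for every $t$, $r_t$ has rank at most $d'$, and there are real functions $u_{t,i},w_{t,i}$ such that either $P_t(s'\mid s,a)=\sum_{i=1}^{d'}u_{t,i}(s',s)w_{t,i}(a)$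 for all $s',s,a$, or $P_t(s'\mid s,a)=\sum_{i=1}^{d'}u_{t,i}(s)w_{t,i}(s',a)$ for all $s',s,a$. Notation: $\|\cdot\|_{\mathrm{op}}$ is the largest singular value, $\|M\|_\infty=\max_{i,j}|M_{ij}|$, $\|M\|_{\max}=\min_{U,V:\,M=UV^\top}\|U\|_{2\to\infty}\|V\|_{2\to\infty}$ where $\|\cdot\|_{2\to\infty}$ is the maximum row Euclidean norm; $\mathbb 1_M$ is the $0/1$ matrix indicating $\operatorname{supp}(M)=\{(i,j):M_{ij}\neq0\}$; $\circ$ is the entrywise product. Operator discrepancy: for $p,q\in\Delta(\mathcal S\times\mathcal A)$, $\operatorname{Dis}(p,q)=\min\{\|g-q\|_{\mathrm{op}}: g\in\Delta(\mathcal S\times\mathcal A),\ \operatorname{supp}(g)\subseteq\operatorname{supp}(p)\}$. Evaluation algorithm (inputs: target policy $\pi^\theta$, $\mu_1$, weight matrices $\rho_t$, estimated transitions $\widehat P_t$, subroutine $\mathrm{ME}$): set $\widehat Q_{H+1}=0$; for $t=H,H-1,\dots,1$: set $Z_t(s,a)=r_t(s,a)+\sum_{s',a'}\widehat P_t(s'\mid s,a)\pi^\theta_{t+1}(a'\mid s')\widehat Q_{t+1}(s',a')$ for $(s,a)\in\operatorname{supp}(\rho_t)$, then $\widehat Q_t=\mathrm{ME}(\rho_t,Z_t)$. Output $\widehat J=\sum_{s,a}\mu_1(s)\pi_1^\theta(a\mid s)\widehat Q_1(s,a)$. (For $t=H$ the sum vanishes since $\widehat Q_{H+1}=0$.) Define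 also $Y_t(s,a)=r_t(s,a)+\sum_{s',a'}P_t(s'\mid s,a)\pi^\theta_{t+1}(a'\mid s')\widehat Q_{t+1}(s',a')$ for all $(s,a)$. Infinite-sample setting: $\widehat P_t(\cdot\mid s,a)=P_t(\cdot\mid s,a)$ for all $(s,a)\in\operatorname{supp}(d_t^{\pi^\beta})$ (so $Z_t=Y_t$ on $\operatorname{supp}(\rho_t)$ when $\rho_t=d_t^{\pi^\beta}$), and the infinite-sample subroutine $\mathrm{ME}(\rho_t,Y_t)$ returns a minimizer of $\|M\|_{\max}$ over $M\in\mathbb R^{S\times A}$ subject to $\mathbb 1_{\rho_t}\circ M=\mathbb 1_{\rho_t}\circ Y_t$ and $\|M\|_\infty\le H-t+1$. *)

(* Defs.v *)
From HB Require Import structures.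
From mathcomp Require Import all_boot all_order all_algebra.
From mathcomp Require Import boolp classical_sets reals.
Set Implicit Arguments. Unset Strict Implicit. Unset Printing Implicit Defensive.
Import Order.TTheory GRing.Theory Num.Theory.
Local Open Scope ring_scope.
Local Open Scope classical_set_scope.

(* Time steps are natural numbers; only t in [1, H] (and t = H+1 for the
   terminal value) are meaningful.  Conventions:
     P t s a s'   = P_t(s' | s, a)
     pi t s a     = pi_t(a | s)
     r t s a      = r_t(s, a)                                            *)

Definition is_dist (R : realType) (T : finType) (p : T -> R) : Prop :=
  (forall x, 0 <= p x) /\ \sum_(x : T) p x = 1.

Definition is_dist2 (R : realType) (St Ac : finType) (g : St -> Ac -> R) : Prop :=
  (forall s a, 0 <= g s a) /\ \sum_(s : St) \sum_(a : Ac) g s a = 1.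

Definition mx_of (R : realType) (St Ac : finType) (M : St -> Ac -> R)
  : 'M[R]_(#|St|, #|Ac|) :=
  \matrix_(i < #|St|, j < #|Ac|) M (enum_val i) (enum_val j).

Definition opnorm (R : realType) (St Ac : finType) (M : St -> Ac -> R) : R :=
  sup [set y : R | exists x : Ac -> R,
         \sum_(a : Ac) x a ^+ 2 <= 1 /\
         y = Num.sqrt (\sum_(s : St) (\sum_(a : Ac) M s a * x a) ^+ 2)].

Definition supnorm (R : realType) (St Ac : finType) (M : St -> Ac -> R) : R :=
  \big[Num.max/0]_(s : St) \big[Num.max/0]_(a : Ac) `|M s a|.

Definition rownorm_max (R : realType) (T : finType) (k : nat) (U : T -> 'I_k -> R) : R :=
  \big[Num.max/0]_(x : T) Num.sqrt (\sum_(i < k) U x i ^+ 2).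

Definition maxnorm (R : realType) (St Ac : finType) (M : St -> Ac -> R) : R :=
  inf [set y : R | exists (k : nat) (U : St -> 'I_k -> R) (V : Ac -> 'I_k -> R),
         (forall s a, M s a = \sum_(i < k) U s i * V a i) /\
         y = rownorm_max U * rownorm_max V].

Definition Dis (R : realType) (St Ac : finType) (p q : St -> Ac -> R) : R :=
  inf [set y : R | exists g : St -> Ac -> R,
         is_dist2 g /\ (forall s a, g s a != 0 -> p s a != 0) /\
         y = opnorm (fun s a => g s a - q s a)].

(* state_dist mu1 P pi n s = Pr_pi(s_{n+1} = s) *)
Fixpoint state_dist (R : realType) (St Ac : finType) (mu1 : St -> R)
  (P : nat -> St -> Ac -> St -> R) (pi : nat -> St -> Ac -> R) (n : nat) : St -> R :=
  match n with
  | 0 => mu1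
  | n'.+1 => fun s' => \sum_(s : St) \sum_(a : Ac)
              state_dist mu1 P pi n' s * pi n'.+1 s a * P n'.+1 s a s'
  end.

(* occ mu1 P pi t s a = d_t^pi(s, a) = Pr_pi(s_t = s, a_t = a), for t >= 1 *)
Definition occ (R : realType) (St Ac : finType) (mu1 : St -> R)
  (P : nat -> St -> Ac -> St -> R) (pi : nat -> St -> Ac -> R) (t : nat)
  : St -> Ac -> R :=
  fun s a => state_dist mu1 P pi t.-1 s * pi t s a.

Definition value (R : realType) (St Ac : finType) (H : nat) (mu1 : St -> R)
  (P : nat -> St -> Ac -> St -> R) (r : nat -> St -> Ac -> R)
  (pi : nat -> St -> Ac -> R) : R :=
  \sum_(1 <= t < H.+1) \sum_(s : St) \sum_(a : Ac) occ mu1 P pi t s a * r t s a.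

Definition low_rank (R : realType) (St Ac : finType) (H d : nat)
  (P : nat -> St -> Ac -> St -> R) (r : nat -> St -> Ac -> R) : Prop :=
  forall t, (1 <= t <= H)%N ->
    (\rank (mx_of (r t)) <= d./2)%N /\
    ((exists (u : 'I_(d./2) -> St -> St -> R) (w : 'I_(d./2) -> Ac -> R),
        forall s' s a, P t s a s' = \sum_(i < d./2) u i s' s * w i a) \/
     (exists (u : 'I_(d./2) -> St -> R) (w : 'I_(d./2) -> St -> Ac -> R),
        forall s' s a, P t s a s' = \sum_(i < d./2) u i s * w i s' a)).

Definition ME_feasible (R : realType) (St Ac : finType) (H t : nat)
  (rho Z M : St -> Ac -> R) : Prop :=
  (forall s a, rho s a != 0 -> M s a = Z s a) /\
  (forall s a, `|M s a| <= H%:R - t%:R + 1).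

Definition ME_output (R : realType) (St Ac : finType) (H t : nat)
  (rho Z M : St -> Ac -> R) : Prop :=
  ME_feasible H t rho Z M /\
  (forall M', ME_feasible H t rho Z M' -> maxnorm M <= maxnorm M').

(* Main.v *)
Require Import Defs.
From HB Require Import structures.
From mathcomp Require Import all_boot all_order all_algebra.
From mathcomp Require Import boolp classical_sets reals.
From mathcomp Require Import ring lra.
From mathcomp Require Import fingroup perm.
Import Order.TTheory GRing.Theory Num.Theory.
Local Open Scope ring_scope.
Local Open Scope classical_set_scope.

Section Gen.
Context {R : realType}.

Lemma CS_sq {I : finType} (a b : I -> R) :
  (\sum_i a i * b i) ^+ 2 <= (\sum_i a i ^+ 2) * (\sum_i b i ^+ 2).
Proof.
set A := \sum_i a i ^+ 2; set B := \sum_i b i ^+ 2; set C := \sum_i a i * b i.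
have A0 : 0 <= A by apply: sumr_ge0 => i _; exact: sqr_ge0.
have B0 : 0 <= B by apply: sumr_ge0 => i _; exact: sqr_ge0.
have [Az|Ap] := eqVneq A 0.
  have ai0 : forall i, a i = 0.
    move=> i; apply/eqP; rewrite -sqrf_eq0; apply/eqP.
    by apply: (psumr_eq0P (P := predT) (fun i _ => sqr_ge0 (a i)) Az).
  rewrite /C big1 ?expr0n ?mulr0n //=; last by move=> i _; rewrite ai0 mul0r.
  by rewrite mulr_ge0.
have Apos : 0 < A by rewrite lt_def Ap A0.
have key : \sum_i (A * b i - C * a i) ^+ 2 = A * (A * B - C ^+ 2).
  have e : forall x z : R, \sum_i (x * b i - z * a i) ^+ 2 =
      x ^+ 2 * (\sum_i b i ^+ 2) + (- (2 * x * z)) * (\sum_i a i * b i)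
      + z ^+ 2 * (\sum_i a i ^+ 2).
    move=> x z; rewrite !mulr_sumr -!big_split /=; apply: eq_bigr => i _; ring.
  rewrite e -/A -/B -/C.
  have e2 : forall x y z : R, x * (x * y - z ^+ 2) = x ^+ 2 * y + (- (2 * x * z)) * z + z ^+ 2 * x.
    by move=> x y z; ring.
  by rewrite e2.
have : 0 <= A * (A * B - C ^+ 2).
  by rewrite -key; apply: sumr_ge0 => i _; exact: sqr_ge0.
by rewrite pmulr_rge0 // subr_ge0.

Qed.

Lemma CS {I : finType} (a b : I -> R) :
  `|\sum_i a i * b i| <= Num.sqrt (\sum_i a i ^+ 2) * Num.sqrt (\sum_i b i ^+ 2).
Proof.
rewrite -sqrtrM; last by apply: sumr_ge0 => i _; exact: sqr_ge0.
by rewrite -sqrtr_sqr ler_sqrt ?CS_sq // mulr_ge0 // sumr_ge0 // => i _; exact: sqr_ge0.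
Qed.

Lemma le_sum_term {I : finType} (F : I -> R) (i0 : I) :
  (forall i, 0 <= F i) -> F i0 <= \sum_i F i.
Proof.
move=> F0; rewrite (bigD1 i0) //= lerDl; apply: sumr_ge0 => i _; exact: F0.
Qed.

Lemma bigmax_ge0 {I : finType} (F : I -> R) : 0 <= \big[Num.max/0]_(i : I) F i.
Proof. by apply: (big_rec (fun x => 0 <= x)) => // i x _ hx; rewrite le_max hx orbT.
Qed.

Lemma bigmax_leP {I : finType} (F : I -> R) (B : R) :
  0 <= B -> (forall i, F i <= B) -> \big[Num.max/0]_(i : I) F i <= B.
Proof. by move=> B0 h; apply: (big_ind (fun x => x <= B)) => // x y hx hy; rewrite ge_max hx. Qed.

Lemma le_bigmaxP {I : finType} (F : I -> R) (i : I) : F i <= \big[Num.max/0]_(i : I) F i.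
Proof. exact: le_bigmax. Qed.

Lemma le_mul_inf (E : set R) (x c : R) :
  (exists y, E y) -> 0 <= c -> (forall y, E y -> x <= c * y) -> x <= c * inf E.
Proof.
move=> [y0 Ey0] c0 h.
have [ce|cp] := eqVneq c 0.
  by have := h _ Ey0; rewrite ce !mul0r.
have cpos : 0 < c by rewrite lt_def cp c0.
rewrite -ler_pdivrMl //; apply: lb_le_inf; first by exists y0.
by move=> y Ey; rewrite ler_pdivrMl //; exact: h.
Qed.

End Gen.

Section KW.
Context {R : realType}.

Lemma det_1_rank1 (k : nat) (u : 'cV[R]_k) (v : 'rV[R]_k) :
  \det (1%:M + u *m v) = 1 + (v *m u) 0 0.
Proof.
pose L : 'M[R]_(k + 1) := block_mx 1%:M 0 v 1%:M.
pose X : 'M[R]_(k + 1) := block_mx (1%:M + u *m v) u 0 1%:M.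
pose Rr : 'M[R]_(k + 1) := block_mx 1%:M 0 (- v) 1%:M.
have E : L *m X *m Rr = block_mx 1%:M u 0 (1%:M + v *m u).
  rewrite /L /X /Rr !mulmx_block.
  rewrite !mul1mx !mul0mx !mulmx0 !mulmx1 !addr0 !add0r.
  congr block_mx.
  - by rewrite mulmxN addrK.
  - by rewrite mulmxN mulmxDr mulmx1 mulmxDl mul1mx mulmxA [v + _]addrC subrr.
  - by rewrite addrC.
have := congr1 determinant E.
rewrite !det_mulmx /L /X /Rr det_lblock det_ublock det_lblock det_ublock !det1.
rewrite !mul1r !mulr1 => ->.
by rewrite det_mx11 !mxE eqxx mulr1n.
Qed.

Lemma det_rank1_update (k : nat) (G : 'M[R]_k) (y : 'cV[R]_k) (a : R) :
  G \in unitmx ->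
  \det (G + a *: (y *m y^T)) = \det G * (1 + a * (y^T *m invmx G *m y) 0 0).
Proof.
move=> uG.
have -> : G + a *: (y *m y^T) = G *m (1%:M + (a *: (invmx G *m y)) *m y^T).
  by rewrite mulmxDr mulmx1 -scalemxAl -scalemxAr !mulmxA mulmxV // mul1mx.
rewrite det_mulmx det_1_rank1; congr (_ * (1 + _)).
by rewrite -scalemxAr mxE mulmxA.
Qed.


Definition Gm (k n : nat) (Yt : 'M[R]_(k, n)) (lam : 'I_n -> R) : 'M[R]_k :=
  Yt *m diag_mx (\row_l lam l) *m Yt^T.
Arguments Gm {k n}.

Lemma GmE k n (Yt : 'M[R]_(k, n)) lam p q :
  Gm Yt lam p q = \sum_l lam l * Yt p l * Yt q l.
Proof.
rewrite /Gm mul_mx_diag !mxE; apply: eq_bigr => l _; rewrite !mxE; ring.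
Qed.

Lemma Gm_pert k n (Yt : 'M[R]_(k, n)) lam (al be : R) (j : 'I_n) :
  Gm Yt (fun l => al * lam l + be * (l == j)%:R)
  = al *: Gm Yt lam + be *: (col j Yt *m (col j Yt)^T).
Proof.
apply/matrixP => p q; rewrite GmE [RHS]mxE [X in X + _]mxE [X in _ + X]mxE GmE mulr_sumr.
rewrite !mxE big_ord1 !mxE.
have -> : \sum_l (al * lam l + be * (l == j)%:R) * Yt p l * Yt q l
   = \sum_l al * (lam l * Yt p l * Yt q l) + \sum_l (be * (l == j)%:R * Yt p l * Yt q l).
  by rewrite -big_split /=; apply: eq_bigr => l _; ring.
congr (_ + _); rewrite (bigD1 j) //= eqxx mulr1 big1 ?addr0 ?mulrA //.
by move=> l /negPf ->; rewrite mulr0 !mul0r.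
Qed.

Lemma Gm_const k n (Yt : 'M[R]_(k, n)) (c : R) :
  Gm Yt (fun _ => c) = c *: (Yt *m Yt^T).
Proof.
apply/matrixP => p q; rewrite GmE [RHS]mxE [X in _ * X]mxE mulr_sumr; apply: eq_bigr => l _.
by rewrite !mxE; ring.
Qed.

Lemma gram_unit k n (Yt : 'M[R]_(k, n)) : row_free Yt -> (Yt *m Yt^T) \in unitmx.
Proof.
move=> fr; rewrite -row_free_unit; apply: inj_row_free => v hv.
have h0 : (v *m Yt) *m (v *m Yt)^T = 0.
  by rewrite trmx_mul !mulmxA -(mulmxA v) hv mul0mx.
have hz' : forall l, (v *m Yt) 0 l = 0.
  move=> l.
  have := congr1 (fun M : 'M[R]_1 => M 0 0) h0; rewrite /= [LHS]mxE [RHS]mxE => hs.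
  have hs' : \sum_l0 (v *m Yt) 0 l0 ^+ 2 = 0.
    rewrite -[RHS]hs; apply: eq_bigr => l0 _; by rewrite [_^T _ _]mxE.
  apply/eqP; rewrite -sqrf_eq0; apply/eqP.
  exact: (psumr_eq0P (P := predT) (fun l0 _ => sqr_ge0 ((v *m Yt) 0 l0)) hs').
have hz : v *m Yt = 0.
  by apply/matrixP => i l; rewrite (ord1 i) hz' [RHS]mxE.
by apply: (row_free_inj fr); rewrite hz mul0mx.
Qed.

Lemma det_bound k (A : 'M[R]_k) (C : R) :
  (forall p q, `|A p q| <= C) -> `|\det A| <= #|{perm 'I_k}|%:R * C ^+ k.
Proof.
move=> hA; rewrite /determinant.
apply: (le_trans (ler_norm_sum _ _ _)).
have -> : #|{perm 'I_k}|%:R * C ^+ k = \sum_(s : {perm 'I_k}) C ^+ k.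
  by rewrite sumr_const mulr_natl.
apply: ler_sum => s _.
rewrite normrM normr_sign mul1r normr_prod.
have -> : C ^+ k = \prod_(i < k) C by rewrite prodr_const card_ord.
by apply: ler_prod => i _; rewrite normr_ge0 hA.
Qed.

Lemma bernoulli (e : R) (n : nat) : 0 <= e -> e <= 1 -> 1 - n%:R * e <= (1 - e) ^+ n.
Proof.
move=> e0 e1; elim: n => [|n IH]; first by rewrite expr0 mul0r subr0.
rewrite exprS -addn1 natrD.
have x0 : 0 <= n%:R :> R by [].
have h1 : 0 <= 1 - e by lra.
have h2 : (1 - e) * (1 - n%:R * e) <= (1 - e) * (1 - e) ^+ n by rewrite ler_wpM2l.
have h3 : 0 <= n%:R * (e * e) by rewrite mulr_ge0 // mulr_ge0.
nra.
Qed.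

Lemma num_pert (k : nat) (dl : R) : 0 < dl -> exists e c : R,
  [/\ 0 < e, e < 1, 0 < c & forall q, k%:R + dl <= q ->
       1 + c <= (1 - e) ^+ k * (1 + e / (1 - e) * q)].
Proof.
move=> dl0; case: k => [|k].
  exists (1/2), (dl/2); split; [lra|lra|lra|] => q hq.
  have -> : (1/2 : R) / (1 - 1/2) = 1 by field.
  rewrite expr0 mul1r; rewrite add0r in hq; lra.
have [x xE] : {x : R | x = k%:R} by exists k%:R.
have x0 : 0 <= x by rewrite xE.
have [D DE] : {D : R | D = 2 * (x + 1) * (x + 1 + dl)} by eexists.
have D0 : 0 < D by rewrite DE; apply: mulr_gt0; [apply: mulr_gt0|]; lra.
have [e eE] : {e : R | e = dl / D} by eexists.
have eD : e * D = dl by rewrite eE divfK // gt_eqF.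
have e0 : 0 < e by rewrite eE divr_gt0.
have e1 : e < 1.
  rewrite eE ltr_pdivrMr // mul1r DE.
  have : (x + 1 + dl) <= (x + 1) * (x + 1 + dl) by rewrite ler_peMl; lra.
  lra.
have xe1 : x * e <= 1.
  have : x * e * D <= D.
    rewrite -mulrA eD DE.
    have : x * dl <= (x + 1) * (x + 1 + dl).
      have -> : (x + 1) * (x + 1 + dl) = x * dl + (x * x + 2 * x + 1 + dl) by ring.
      rewrite lerDl; have := mulr_ge0 x0 x0; lra.
    move=> h; rewrite -mulrA.
    have hp : 0 <= (x + 1) * (x + 1 + dl) by rewrite mulr_ge0 //; lra.
    lra.
  by move=> h; rewrite -(ler_pM2r D0) mul1r.
have xe2 : x * e * (x + dl) <= dl / 2.
  have : x * (x + dl) <= (x + 1) * (x + 1 + dl).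
    have -> : (x + 1) * (x + 1 + dl) = x * (x + dl) + (2 * x + 1 + dl) by ring.
    rewrite lerDl; lra.
  move=> h; have : e * (x * (x + dl)) <= e * ((x + 1) * (x + 1 + dl)) by rewrite ler_wpM2l // ltW.
  have : e * ((x + 1) * (x + 1 + dl)) = dl / 2.
    have -> : e * ((x + 1) * (x + 1 + dl)) = (e * D) / 2 by rewrite DE; field.
    by rewrite eD.
  lra.
exists e, (e * dl / 2); split => //; first by rewrite divr_gt0 // mulr_gt0.
move=> q hq.
have hq' : x + 1 + dl <= q by move: hq; rewrite xE -addn1 natrD.
have -> : (1 - e) ^+ k.+1 * (1 + e / (1 - e) * q) = (1 - e) ^+ k * (1 - e + e * q).
  rewrite exprSr -mulrA; congr (_ * _); field; lra.
have Pn := @bernoulli e k (ltW e0) (ltW e1); rewrite -xE in Pn.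
have Pn0 : 0 <= (1 - e) ^+ k by rewrite exprn_ge0 // subr_ge0 ltW.
have T1 : 1 + e * (x + dl) <= 1 - e + e * q.
  have : e * (x + 1 + dl) <= e * q by rewrite ler_wpM2l // ltW.
  lra.
have T0 : 0 <= 1 - e + e * q.
  have : 0 <= e * (x + dl) by rewrite mulr_ge0 // ?ltW //; lra.
  lra.
have s1 : (1 - x * e) * (1 - e + e * q) <= (1 - e) ^+ k * (1 - e + e * q) by rewrite ler_wpM2r.
have s2 : (1 - x * e) * (1 + e * (x + dl)) <= (1 - x * e) * (1 - e + e * q)
  by rewrite ler_wpM2l // subr_ge0.
have s3 : (1 - x * e) * (1 + e * (x + dl)) = 1 + e * dl - x * e * (e * (x + dl)) by ring.
have s4 : x * e * (e * (x + dl)) <= e * (dl / 2).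
  have -> : x * e * (e * (x + dl)) = e * (x * e * (x + dl)) by ring.
  by rewrite ler_wpM2l // ltW.
lra.
Qed.

Definition qv (k n : nat) (Yt : 'M[R]_(k, n)) (lam : 'I_n -> R) (j : 'I_n) : R :=
  (Yt^T *m invmx (Gm Yt lam) *m Yt) j j.
Arguments qv {k n}.

Lemma qv_col k n (Yt : 'M[R]_(k, n)) (X : 'M[R]_k) (j : 'I_n) :
  ((col j Yt)^T *m X *m col j Yt) 0 0 = (Yt^T *m X *m Yt) j j.
Proof.
rewrite tr_col -row_mul !mxE; apply: eq_bigr => l _; by rewrite !mxE.
Qed.

Lemma design k n (Yt : 'M[R]_(k, n)) (dl : R) : row_free Yt -> 0 < dl ->
  exists lam : 'I_n -> R, [/\ (forall l, 0 <= lam l), \sum_l lam l <= 1,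
     Gm Yt lam \in unitmx & forall j, qv Yt lam j <= k%:R + dl].
Proof.
move=> fr dl0.
have [e [c [e0 e1 c0 hq]]] := @num_pert k dl dl0.
pose Sset := [set z : R | exists lam : 'I_n -> R,
   [/\ (forall l, 0 <= lam l), \sum_l lam l <= 1 & z = `|\det (Gm Yt lam)|]].
pose Cb := \sum_p \sum_q \sum_l `|Yt p l| * `|Yt q l|.
have ub : forall z, Sset z -> z <= #|{perm 'I_k}|%:R * Cb ^+ k.
  move=> z [lam [l0 ls ->]]; apply: det_bound => p q; rewrite GmE.
  apply: le_trans (ler_norm_sum _ _ _) _.
  apply: (@le_trans _ _ (\sum_l `|Yt p l| * `|Yt q l|)).
    apply: ler_sum => l _; rewrite !normrM.
    have ll : lam l <= 1.
      apply: (le_trans _ ls); exact: (le_sum_term (fun l => lam l) l l0).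
    rewrite ger0_norm // -mulrA -[X in _ <= X]mul1r ler_wpM2r //.
    by rewrite mulr_ge0.
  apply: le_trans (le_sum_term (fun q => \sum_l `|Yt p l| * `|Yt q l|) q _) _.
    by move=> q'; apply: sumr_ge0 => l _; rewrite mulr_ge0.
  apply: le_trans (le_sum_term (fun p => \sum_q \sum_l `|Yt p l| * `|Yt q l|) p _) _ => //.
  by move=> p'; apply: sumr_ge0 => q' _; apply: sumr_ge0 => l _; rewrite mulr_ge0.
have hub : has_ubound Sset by exists (#|{perm 'I_k}|%:R * Cb ^+ k) => z; exact: ub.
pose c0' : R := 1 / (n%:R + 1).
have c0p : 0 < c0' by rewrite /c0' divr_gt0 // ltr_wpDl.
have S0 : Sset `|\det (Gm Yt (fun _ => c0'))|.
  exists (fun _ => c0'); split => //; first by move=> l; exact: ltW.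
  rewrite sumr_const card_ord -mulr_natl /c0' mul1r ler_pdivrMr ?mul1r ?lerDl //.
  by rewrite ltr_wpDl.
have z0 : 0 < `|\det (Gm Yt (fun _ => c0'))|.
  rewrite normr_gt0 Gm_const detZ mulf_neq0 //; first by rewrite expf_neq0 // gt_eqF.
  by have := gram_unit _ _ _ fr; rewrite unitmxE unitfE.
have Smax0 : 0 < sup Sset.
  by apply: lt_le_trans z0 _; apply: ub_le_sup.
have [z Sz zgt] : exists2 z, Sset z & sup Sset / (1 + c) < z.
  apply: sup_gt; first by exists `|\det (Gm Yt (fun _ => c0'))|.
  rewrite ltr_pdivrMr ?ltr_pMr //; lra.
case: Sz => lam [l0 ls zE].
have dpos : 0 < `|\det (Gm Yt lam)|.
  by rewrite -zE; apply: le_lt_trans zgt; rewrite divr_ge0 // ?ltW // ltr_wpDr // ltW.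
have uG : Gm Yt lam \in unitmx.
  by rewrite unitmxE unitfE -normr_gt0.
exists lam; split => // j.
rewrite leNgt; apply/negP => hgt.
pose lam' := fun l : 'I_n => (1 - e) * lam l + e * (l == j)%:R.
have S' : Sset `|\det (Gm Yt lam')|.
  exists lam'; split => //.
    move=> l; rewrite /lam' addr_ge0 // mulr_ge0 // ?subr_ge0 ?ltW //.
  rewrite /lam' big_split /= -!mulr_sumr.
  have sj : \sum_l ((l == j)%:R : R) = 1.
    by rewrite (bigD1 j) //= eqxx big1 ?addr0 // => l /negPf ->.
  rewrite sj mulr1.
  have : (1 - e) * \sum_l lam l <= 1 - e by rewrite -[X in _ <= X]mulr1 ler_wpM2l // subr_ge0 ltW.
  lra.
have e1' : 1 - e != 0 by rewrite subr_eq0 eq_sym lt_eqF.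
have GE : Gm Yt lam' = (1 - e) *: (Gm Yt lam + (e / (1 - e)) *: (col j Yt *m (col j Yt)^T)).
  by rewrite Gm_pert scalerDr scalerA mulrC divfK.
have dE : \det (Gm Yt lam') = (1 - e) ^+ k * (\det (Gm Yt lam) * (1 + e / (1 - e) * qv Yt lam j)).
  by rewrite GE detZ det_rank1_update // qv_col.
have qpos : 0 < 1 + e / (1 - e) * qv Yt lam j.
  have : 0 < qv Yt lam j by apply: le_lt_trans hgt; rewrite addr_ge0 // ltW.
  move=> qp; have a0 : 0 < e / (1 - e) by rewrite divr_gt0 // subr_gt0.
  have := mulr_gt0 a0 qp; lra.
have key := hq _ (ltW hgt).
have : sup Sset < `|\det (Gm Yt lam')|.
  rewrite dE normrM [`|(1 - e) ^+ k|]ger0_norm; last by rewrite exprn_ge0 // subr_ge0 ltW.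
  rewrite normrM (gtr0_norm qpos) mulrCA.
  apply: lt_le_trans (_ : `|\det (Gm Yt lam)| * (1 + c) <= _).
    by rewrite -ltr_pdivrMr ?ltr_wpDr ?ltW // -zE.
  by rewrite ler_wpM2l // ltW.
rewrite ltNge => /negP; apply.
by apply: ub_le_sup.
Qed.

Lemma kw_fact m n (M : 'M[R]_(m, n)) (B dl : R) :
  (forall i j, `|M i j| <= B) -> 0 < dl ->
  exists U : 'I_m -> 'I_n -> R, exists V : 'I_n -> 'I_n -> R,
   [/\ forall i j, M i j = \sum_l U i l * V j l,
       forall i, \sum_l U i l ^+ 2 <= B ^+ 2 &
       forall j, \sum_l V j l ^+ 2 <= (\rank M)%:R + dl].
Proof.
move=> hB dl0.
have [lam [l0 ls uG hq]] := design _ _ _ _ (row_base_free M) dl0.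
have hMb := mulmx_base M.
move: (row_base M) uG hq hMb => Yt uG hq hMb.
move: (col_base M) hMb => Cb hMb.
set G := Gm Yt lam.
set D := diag_mx (\row_l lam l).
set Pm := Yt^T *m invmx G *m Yt.
have sl : forall l, Num.sqrt (lam l) * Num.sqrt (lam l) = lam l.
  by move=> l; rewrite -expr2 sqr_sqrtr.
have GT : G^T = G.
  by apply/matrixP => p q; rewrite mxE /G !GmE; apply: eq_bigr => l _; ring.
have PT : Pm^T = Pm.
  by rewrite /Pm !trmx_mul trmxK trmx_inv GT !mulmxA.
have I1 : M *m D *m Pm = M.
  rewrite -{1}hMb.
  have -> : Cb *m Yt *m D *m Pm = Cb *m (G *m invmx G) *m Yt.
    by rewrite /Pm /G /Gm -/D !mulmxA.
  by rewrite mulmxV // mulmx1 hMb.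
have I2 : Pm *m D *m Pm = Pm.
  have -> : Pm *m D *m Pm = Yt^T *m (invmx G *m (G *m invmx G)) *m Yt.
    by rewrite /Pm /G /Gm -/D !mulmxA.
  by rewrite mulmxV // mulmx1.
have PmE : Pm = Yt^T *m invmx G *m Yt by [].
clearbody Pm.
exists (fun i l => Num.sqrt (lam l) * M i l), (fun j l => Num.sqrt (lam l) * Pm l j).
split.
- move=> i j; rewrite -{1}I1 !mxE; apply: eq_bigr => l _.
  rewrite mul_mx_diag !mxE.
  have := sl l; move: (Num.sqrt (lam l)) => x hx.
  by rewrite -hx; ring.
- move=> i.
  apply: (@le_trans _ _ (\sum_l lam l * B ^+ 2)).
    apply: ler_sum => l _.
    rewrite exprMn sqr_sqrtr // ler_wpM2l //.
    have := hB i l; rewrite ler_norml => /andP[h1 h2].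
    have hB0 : 0 <= B by apply: le_trans (normr_ge0 (M i l)) (hB i l).
    rewrite -subr_ge0.
    have -> : B ^+ 2 - M i l ^+ 2 = (B - M i l) * (B + M i l) by ring.
    by apply: mulr_ge0; lra.
  rewrite -mulr_suml -[X in _ <= X]mul1r ler_wpM2r // sqr_ge0 //.
- move=> j.
  have -> : \sum_l (Num.sqrt (lam l) * Pm l j) ^+ 2 = (Pm *m D *m Pm) j j.
    rewrite mul_mx_diag !mxE; apply: eq_bigr => l _.
    rewrite !mxE exprMn sqr_sqrtr //.
    have -> : Pm j l = Pm l j by rewrite -[in LHS]PT mxE.
    by rewrite expr2; ring.
  by rewrite I2 PmE; exact: hq.
Qed.

End KW.

Section Fun.
Context {R : realType}.

Lemma opnorm_ub {St Ac : finType} (G : St -> Ac -> R) :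
  has_ubound [set y : R | exists x : Ac -> R,
         \sum_(a : Ac) x a ^+ 2 <= 1 /\
         y = Num.sqrt (\sum_(s : St) (\sum_(a : Ac) G s a * x a) ^+ 2)].
Proof.
exists (Num.sqrt (\sum_s \sum_a G s a ^+ 2)) => y [x [hx ->]].
rewrite ler_sqrt; last by apply: sumr_ge0 => s _; apply: sumr_ge0 => a _; exact: sqr_ge0.
apply: ler_sum => s _.
apply: le_trans (CS_sq _ _) _.
have h0 : 0 <= \sum_a G s a ^+ 2 by apply: sumr_ge0 => a _; exact: sqr_ge0.
by rewrite -[X in _ <= X]mulr1 ler_wpM2l.
Qed.

Lemma opnorm_ge0 {St Ac : finType} (G : St -> Ac -> R) : 0 <= opnorm G.
Proof.
apply: le_trans (ub_le_sup (opnorm_ub G) _).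
  exact: (lexx 0).
exists (fun _ => 0); split.
  by rewrite big1 // => a _; rewrite expr0n.
by rewrite big1 ?sqrtr0 // => s _; rewrite big1 ?expr0n // => a _; rewrite mulr0.
Qed.

Lemma opnorm_bound {St Ac : finType} (G : St -> Ac -> R) (x : Ac -> R) :
  Num.sqrt (\sum_(s : St) (\sum_(a : Ac) G s a * x a) ^+ 2)
  <= opnorm G * Num.sqrt (\sum_a x a ^+ 2).
Proof.
have X0 : 0 <= \sum_a x a ^+ 2 by apply: sumr_ge0 => a _; exact: sqr_ge0.
have A0 : 0 <= \sum_(s : St) (\sum_(a : Ac) G s a * x a) ^+ 2.
  by apply: sumr_ge0 => s _; exact: sqr_ge0.
have [N0|Np] := eqVneq (\sum_a x a ^+ 2) 0.
  have xa : forall a, x a = 0.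
    move=> a; apply/eqP; rewrite -sqrf_eq0; apply/eqP.
    exact: (psumr_eq0P (P := predT) (fun a _ => sqr_ge0 (x a)) N0).
  rewrite N0 sqrtr0 mulr0 big1 ?sqrtr0 // => s _.
  by rewrite big1 ?expr0n // => a _; rewrite xa mulr0.
set N := Num.sqrt (\sum_a x a ^+ 2).
have Npos : 0 < N by rewrite /N sqrtr_gt0 lt_def Np X0.
have NN : N ^+ 2 = \sum_a x a ^+ 2 by rewrite /N sqr_sqrtr.
have el : [set y : R | exists x : Ac -> R,
         \sum_(a : Ac) x a ^+ 2 <= 1 /\
         y = Num.sqrt (\sum_(s : St) (\sum_(a : Ac) G s a * x a) ^+ 2)]
     (Num.sqrt (\sum_(s : St) (\sum_(a : Ac) G s a * x a) ^+ 2) / N).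
  exists (fun a => x a / N); split.
    have -> : \sum_a (x a / N) ^+ 2 = (\sum_a x a ^+ 2) / N ^+ 2.
      by rewrite mulr_suml; apply: eq_bigr => a _; rewrite expr_div_n.
    by rewrite NN divff.
  have -> : \sum_s (\sum_a G s a * (x a / N)) ^+ 2
          = (\sum_(s : St) (\sum_(a : Ac) G s a * x a) ^+ 2) * (N ^-1) ^+ 2.
    rewrite mulr_suml; apply: eq_bigr => s _.
    rewrite -exprMn mulr_suml; congr (_ ^+ 2); apply: eq_bigr => a _.
    by rewrite mulrA.
  by rewrite sqrtrM // sqrtr_sqr ger0_norm // invr_ge0 ltW.
have := ub_le_sup (opnorm_ub G) el.
by rewrite -/(opnorm G) ler_pdivrMr.
Qed.

Lemma rownorm_ge0 {T : finType} {k : nat} (U : T -> 'I_k -> R) : 0 <= rownorm_max U.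
Proof. exact: bigmax_ge0. Qed.

Lemma row_le_rownorm {T : finType} {k : nat} (U : T -> 'I_k -> R) (s : T) :
  \sum_i U s i ^+ 2 <= rownorm_max U ^+ 2.
Proof.
have h0 : 0 <= \sum_i U s i ^+ 2 by apply: sumr_ge0 => i _; exact: sqr_ge0.
rewrite -(sqr_sqrtr h0) !expr2.
have h := le_bigmaxP (fun x => Num.sqrt (\sum_(i < k) U x i ^+ 2)) s.
by apply: ler_pM => //; exact: sqrtr_ge0.
Qed.

Lemma sqrt_sum_rows {T : finType} {k : nat} (U : T -> 'I_k -> R) :
  Num.sqrt (\sum_i \sum_(s : T) U s i ^+ 2) <= Num.sqrt #|T|%:R * rownorm_max U.
Proof.
rewrite exchange_big /=.
have -> : Num.sqrt #|T|%:R * rownorm_max U = Num.sqrt (#|T|%:R * rownorm_max U ^+ 2).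
  by rewrite sqrtrM // sqrtr_sqr ger0_norm // rownorm_ge0.
rewrite ler_sqrt; last by rewrite mulr_ge0 // sqr_ge0.
apply: le_trans (ler_sum _ (fun s _ => row_le_rownorm U s)) _.
by rewrite sumr_const mulr_natl.
Qed.

Lemma inner_fact {St Ac : finType} (G M : St -> Ac -> R) (k : nat)
  (U : St -> 'I_k -> R) (V : Ac -> 'I_k -> R) :
  (forall s a, M s a = \sum_i U s i * V a i) ->
  `|\sum_s \sum_a G s a * M s a|
  <= opnorm G * (Num.sqrt #|St|%:R * rownorm_max U) * (Num.sqrt #|Ac|%:R * rownorm_max V).
Proof.
move=> hM.
have -> : \sum_s \sum_a G s a * M s a
   = \sum_i \sum_s U s i * (\sum_a G s a * V a i).
  transitivity (\sum_s \sum_a \sum_i G s a * (U s i * V a i)).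
    by apply: eq_bigr => s _; apply: eq_bigr => a _; rewrite hM mulr_sumr.
  transitivity (\sum_s \sum_i \sum_a G s a * (U s i * V a i)).
    by apply: eq_bigr => s _; exact: exchange_big.
  rewrite exchange_big /=; apply: eq_bigr => i _; apply: eq_bigr => s _.
  by rewrite mulr_sumr; apply: eq_bigr => a _; ring.
apply: le_trans (ler_norm_sum _ _ _) _.
pose al i := Num.sqrt (\sum_s U s i ^+ 2).
pose be i := Num.sqrt (\sum_a V a i ^+ 2).
apply: (@le_trans _ _ (\sum_i al i * (opnorm G * be i))).
  apply: ler_sum => i _.
  apply: le_trans (CS _ _) _.
  by rewrite ler_wpM2l ?sqrtr_ge0 // opnorm_bound.
have -> : \sum_i al i * (opnorm G * be i) = opnorm G * \sum_i al i * be i.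
  by rewrite mulr_sumr; apply: eq_bigr => i _; ring.
rewrite -mulrA ler_wpM2l ?opnorm_ge0 //.
apply: le_trans (ler_norm _) _.
apply: le_trans (CS _ _) _.
apply: ler_pM; try exact: sqrtr_ge0.
- have -> : \sum_i al i ^+ 2 = \sum_i \sum_s U s i ^+ 2.
    apply: eq_bigr => i _; rewrite sqr_sqrtr //; apply: sumr_ge0 => s _; exact: sqr_ge0.
  exact: sqrt_sum_rows.
- have -> : \sum_i be i ^+ 2 = \sum_i \sum_a V a i ^+ 2.
    apply: eq_bigr => i _; rewrite sqr_sqrtr //; apply: sumr_ge0 => s _; exact: sqr_ge0.
  exact: sqrt_sum_rows.
Qed.

Definition mnset {St Ac : finType} (M : St -> Ac -> R) : set R :=
  [set y : R | exists (k : nat) (U : St -> 'I_k -> R) (V : Ac -> 'I_k -> R),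
         (forall s a, M s a = \sum_(i < k) U s i * V a i) /\
         y = rownorm_max U * rownorm_max V].

Lemma mnset_ne {St Ac : finType} (M : St -> Ac -> R) : exists y, mnset M y.
Proof.
exists (rownorm_max (fun s (i : 'I_#|Ac|) => M s (enum_val i)) *
        rownorm_max (fun a (i : 'I_#|Ac|) => ((a == enum_val i)%:R : R))).
exists #|Ac|, (fun s i => M s (enum_val i)), (fun a i => (a == enum_val i)%:R); split => //.
move=> s a; rewrite (bigD1 (enum_rank a)) //= enum_rankK eqxx mulr1 big1 ?addr0 //.
move=> i hi; case: eqP => [ai|]; last by rewrite mulr0.
by move: hi; rewrite ai enum_valK eqxx.
Qed.

Lemma mnset_lb {St Ac : finType} (M : St -> Ac -> R) : has_lbound (mnset M).
Proof.
by exists 0 => y [k [U [V [_ ->]]]]; rewrite mulr_ge0 // rownorm_ge0.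
Qed.

Lemma maxnormE {St Ac : finType} (M : St -> Ac -> R) : maxnorm M = inf (mnset M).
Proof. by []. Qed.

Lemma maxnorm_ge0 {St Ac : finType} (M : St -> Ac -> R) : 0 <= maxnorm M.
Proof.
rewrite maxnormE; apply: lb_le_inf; first exact: mnset_ne.
by move=> y [k [U [V [_ ->]]]]; rewrite mulr_ge0 // rownorm_ge0.
Qed.

Lemma inner_maxnorm {St Ac : finType} (G M : St -> Ac -> R) :
  `|\sum_s \sum_a G s a * M s a|
  <= opnorm G * Num.sqrt #|St|%:R * Num.sqrt #|Ac|%:R * maxnorm M.
Proof.
rewrite maxnormE; apply: le_mul_inf; first exact: mnset_ne.
  by rewrite !mulr_ge0 ?sqrtr_ge0 ?opnorm_ge0.
move=> y [k [U [V [hM ->]]]].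
apply: le_trans (inner_fact G M k U V hM) _.
by rewrite le_eqVlt; apply/orP; left; apply/eqP; ring.
Qed.

Lemma maxnorm_rank {St Ac : finType} (M : St -> Ac -> R) (B : R) :
  0 <= B -> (forall s a, `|M s a| <= B) ->
  maxnorm M <= Num.sqrt (\rank (mx_of M))%:R * B.
Proof.
move=> B0 hB; apply/ler_addgt0Pr => eps eps0.
set kk : R := (\rank (mx_of M))%:R.
have kk0 : 0 <= kk by rewrite /kk.
pose eta := eps / (B + 1).
have eta0 : 0 < eta by rewrite /eta divr_gt0 // ltr_wpDl.
pose dl := 2 * eta * Num.sqrt kk + eta ^+ 2.
have dl0 : 0 < dl.
  rewrite /dl ltr_wpDl ?exprn_gt0 //.
  apply: mulr_ge0; last exact: sqrtr_ge0.
  by apply: mulr_ge0; [|exact: ltW].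
have hBm : forall i j, `|mx_of M i j| <= B by move=> i j; rewrite mxE.
have [U [V [hf hU hV]]] := kw_fact _ _ _ _ _ hBm dl0.
pose U' := fun s l => U (enum_rank s) l.
pose V' := fun a l => V (enum_rank a) l.
have mem : mnset M (rownorm_max U' * rownorm_max V').
  exists #|Ac|, U', V'; split => // s a.
  by rewrite /U' /V' -hf mxE !enum_rankK.
apply: le_trans (ge_inf (mnset_lb M) mem) _.
have rU : rownorm_max U' <= B.
  apply: bigmax_leP => // s.
  by rewrite -(ger0_norm B0) -sqrtr_sqr ler_sqrt ?sqr_ge0 // hU.
have rV : rownorm_max V' <= Num.sqrt kk + eta.
  apply: bigmax_leP => [|a]; first by rewrite addr_ge0 ?sqrtr_ge0 // ltW.
  have -> : Num.sqrt kk + eta = Num.sqrt (kk + dl).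
    have -> : kk + dl = (Num.sqrt kk + eta) ^+ 2.
      rewrite /dl sqrrD sqr_sqrtr //; ring.
    by rewrite sqrtr_sqr ger0_norm // addr_ge0 ?sqrtr_ge0 // ltW.
  rewrite ler_sqrt ?hV //.
  by rewrite addr_ge0 // ltW.
apply: le_trans (ler_pM (rownorm_ge0 _) (rownorm_ge0 _) rU rV) _.
rewrite mulrDr.
have hBe : B * eta <= eps.
  rewrite /eta mulrA ler_pdivrMr ?ltr_wpDl // mulrDr mulr1 [eps * B]mulrC lerDl.
  exact: ltW.
rewrite [B * Num.sqrt kk]mulrC; lra.
Qed.

End Fun.

Section MDP.
Context {R : realType}.

Lemma swap4 {I J K L : finType} (F : I -> J -> K -> L -> R) :
  \sum_i \sum_j \sum_k \sum_l F i j k l = \sum_k \sum_l \sum_i \sum_j F i j k l.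
Proof.
transitivity (\sum_i \sum_k \sum_j \sum_l F i j k l).
  by apply: eq_bigr => i _; exact: exchange_big.
transitivity (\sum_i \sum_k \sum_l \sum_j F i j k l).
  by apply: eq_bigr => i _; apply: eq_bigr => k _; exact: exchange_big.
rewrite exchange_big /=; apply: eq_bigr => k _; exact: exchange_big.
Qed.

Lemma rank_fact {St Ac : finType} (W : St -> Ac -> R) (k : nat)
  (f : St -> 'I_k -> R) (g : Ac -> 'I_k -> R) :
  (forall s a, W s a = \sum_i f s i * g a i) -> (\rank (mx_of W) <= k)%N.
Proof.
move=> hW.
have -> : mx_of W = (\matrix_(x < #|St|, i < k) f (enum_val x) i) *m
                    (\matrix_(i < k, y < #|Ac|) g (enum_val y) i).
  apply/matrixP => x y; rewrite !mxE hW; apply: eq_bigr => i _; by rewrite !mxE.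
apply: leq_trans (mxrankM_maxl _ _) _; exact: rank_leq_col.
Qed.

Lemma sd_dist {St Ac : finType} (H : nat) (mu1 : St -> R)
  (P : nat -> St -> Ac -> St -> R) (pi : nat -> St -> Ac -> R) :
  is_dist mu1 ->
  (forall t, (1 <= t <= H)%N -> forall s a, is_dist (P t s a)) ->
  (forall t, (1 <= t <= H)%N -> forall s, is_dist (pi t s)) ->
  forall n, (n < H)%N -> is_dist (state_dist mu1 P pi n).
Proof.
move=> hmu hP hpi; elim=> [|n IH] hn //=.
have [IH0 IH1] := IH (ltnW hn).
have tH : (1 <= n.+1 <= H)%N by rewrite ltnS leq0n ltnW.
split.
  move=> s'; apply: sumr_ge0 => s _; apply: sumr_ge0 => a _.
  by rewrite !mulr_ge0 //; [case: (hpi _ tH s) | case: (hP _ tH s a)].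
rewrite exchange_big /= -[RHS]IH1; apply: eq_bigr => s _.
rewrite exchange_big /=.
transitivity (\sum_a state_dist mu1 P pi n s * pi n.+1 s a).
  apply: eq_bigr => a _; rewrite -mulr_sumr.
  by case: (hP _ tH s a) => _ ->; rewrite mulr1.
by rewrite -mulr_sumr; case: (hpi _ tH s) => _ ->; rewrite mulr1.
Qed.

Lemma occ_dist {St Ac : finType} (H : nat) (mu1 : St -> R)
  (P : nat -> St -> Ac -> St -> R) (pi : nat -> St -> Ac -> R) :
  is_dist mu1 ->
  (forall t, (1 <= t <= H)%N -> forall s a, is_dist (P t s a)) ->
  (forall t, (1 <= t <= H)%N -> forall s, is_dist (pi t s)) ->
  forall t, (1 <= t <= H)%N -> is_dist2 (occ mu1 P pi t).
Proof.
move=> hmu hP hpi t tH.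
have hn : (t.-1 < H)%N by case/andP: tH; case: t => //= t _ ->.
have [s0 s1] := sd_dist _ _ _ _ hmu hP hpi _ hn.
split.
  by move=> s a; rewrite /occ mulr_ge0 //; case: (hpi _ tH s).
rewrite -[RHS]s1; apply: eq_bigr => s _; rewrite /occ -mulr_sumr.
by case: (hpi _ tH s) => _ ->; rewrite mulr1.
Qed.

Lemma occ_step {St Ac : finType} (mu1 : St -> R)
  (P : nat -> St -> Ac -> St -> R) (pi : nat -> St -> Ac -> R) (t : nat)
  (Q : St -> Ac -> R) :
  \sum_s \sum_a occ mu1 P pi t.+1 s a *
     (\sum_(s' : St) \sum_(a' : Ac) P t.+1 s a s' * pi t.+2 s' a' * Q s' a')
  = \sum_s' \sum_a' occ mu1 P pi t.+2 s' a' * Q s' a'.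
Proof.
rewrite /occ /=.
transitivity (\sum_s \sum_a \sum_(s' : St) \sum_(a' : Ac)
   (state_dist mu1 P pi t s * pi t.+1 s a * P t.+1 s a s') * (pi t.+2 s' a' * Q s' a')).
  apply: eq_bigr => s _; apply: eq_bigr => a _; rewrite mulr_sumr.
  apply: eq_bigr => s' _; rewrite mulr_sumr; apply: eq_bigr => a' _; ring.
rewrite swap4; apply: eq_bigr => s' _; apply: eq_bigr => a' _.
rewrite -mulrA mulr_suml; apply: eq_bigr => s _; rewrite mulr_suml; apply: eq_bigr => a _.
by [].
Qed.

End MDP.

Local Close Scope classical_set_scope.

Theorem theorem1 (R : realType) (St Ac : finType) (H d : nat)
  (mu1 : St -> R) (P : nat -> St -> Ac -> St -> R) (r : nat -> St -> Ac -> R)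
  (piT piB : nat -> St -> Ac -> R)
  (Phat : nat -> St -> Ac -> St -> R) (Qhat : nat -> St -> Ac -> R) :
  is_dist mu1 ->
  (forall t, (1 <= t <= H)%N -> forall s a, is_dist (P t s a)) ->
  (forall t, (1 <= t <= H)%N -> forall s a, 0 <= r t s a <= 1) ->
  (forall t, (1 <= t <= H)%N -> forall s, is_dist (piT t s)) ->
  (forall t, (1 <= t <= H)%N -> forall s, is_dist (piB t s)) ->
  low_rank H d P r ->
  (* infinite-sample setting: Phat_t = P_t on supp(d_t^{pi^beta}) *)
  (forall t, (1 <= t <= H)%N -> forall s a,
      occ mu1 P piB t s a != 0 -> forall s', Phat t s a s' = P t s a s') ->
  (* the evaluation algorithm with rho_t = d_t^{pi^beta} *)
  (forall s a, Qhat H.+1 s a = 0) ->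
  (forall t, (1 <= t <= H)%N ->
      ME_output H t (occ mu1 P piB t)
        (fun s a => r t s a + \sum_(s' : St) \sum_(a' : Ac)
                      Phat t s a s' * piT t.+1 s' a' * Qhat t.+1 s' a')
        (Qhat t)) ->
  `| \sum_(s : St) \sum_(a : Ac) mu1 s * piT 1%N s a * Qhat 1%N s a
     - value H mu1 P r piT |
  <= 2 * H%:R * Num.sqrt (d%:R * #|St|%:R * #|Ac|%:R) *
     \sum_(1 <= t < H.+1) Dis (occ mu1 P piB t) (occ mu1 P piT t).

Proof.
move=> hmu hP hr hpiT hpiB hlr hPhat hQH hME.
pose q t := occ mu1 P piT t.
pose pB t := occ mu1 P piB t.
pose Y t := fun s a => r t s a + \sum_(s' : St) \sum_(a' : Ac) P t s a s' * piT t.+1 s' a' * Qhat t.+1 s' a'.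
pose A t := \sum_s \sum_a q t s a * Qhat t s a.
have tel : \sum_s \sum_a mu1 s * piT 1%N s a * Qhat 1%N s a - value H mu1 P r piT
   = \sum_(1 <= t < H.+1) \sum_s \sum_a q t s a * (Qhat t s a - Y t s a).
  have stepE : forall t, (1 <= t < H.+1)%N -> \sum_s \sum_a q t s a * (Qhat t s a - Y t s a)
        = (A t - A t.+1) - \sum_s \sum_a q t s a * r t s a.
    case=> // t' _.
    have hY : \sum_s \sum_a q t'.+1 s a * Y t'.+1 s a
        = \sum_s \sum_a q t'.+1 s a * r t'.+1 s a + A t'.+2.
      rewrite /A -(occ_step mu1 P piT t' (Qhat t'.+2)) -big_split /=; apply: eq_bigr => s _.
      by rewrite -big_split /=; apply: eq_bigr => a _; rewrite /Y mulrDr.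
    transitivity (A t'.+1 - \sum_s \sum_a q t'.+1 s a * Y t'.+1 s a).
      rewrite /A -sumrB; apply: eq_bigr => s _; rewrite -sumrB; apply: eq_bigr => a _.
      by rewrite mulrBr.
    by rewrite hY; ring.
  rewrite (eq_big_nat _ _ stepE) sumrB.
  have -> : \sum_(1 <= t < H.+1) (A t - A t.+1) = A 1%N - A H.+1.
    rewrite -[LHS]opprK -sumrN.
    under eq_bigr => t _ do rewrite opprB.
    by rewrite telescope_sumr // opprB.
  have -> : A H.+1 = 0.
    by rewrite /A big1 // => s _; rewrite big1 // => a _; rewrite hQH mulr0.
  by rewrite subr0.
rewrite tel.
have sqE : Num.sqrt (d%:R * #|St|%:R * #|Ac|%:R) = Num.sqrt d%:R * Num.sqrt #|St|%:R * Num.sqrt #|Ac|%:R :> R.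
  by rewrite sqrtrM ?mulr_ge0 // sqrtrM.
rewrite sqE.
apply: le_trans (ler_norm_sum _ _ _) _.
rewrite mulr_sumr; apply: ler_sum_nat => t /andP[t1 tH].
have tH' : (1 <= t <= H)%N by rewrite t1 -ltnS.
have tleH : (t <= H)%N by rewrite -ltnS.
have Qb : forall s' a', `|Qhat t.+1 s' a'| <= H%:R - t%:R.
  move=> s' a'; case: (ltnP t H) => [tlt|tge].
    have tH1 : (1 <= t.+1 <= H)%N by rewrite tlt.
    have [[_ hb] _] := hME t.+1 tH1.
    by move: (hb s' a'); rewrite -addn1 natrD; lra.
  have tE : t = H by apply/eqP; rewrite eqn_leq tleH tge.
  by rewrite tE hQH normr0 subrr.
have Wb : forall s a,
    `|\sum_(s' : St) \sum_(a' : Ac) P t s a s' * piT t.+1 s' a' * Qhat t.+1 s' a'|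
    <= H%:R - t%:R.
  move=> s a; case: (ltnP t H) => [tlt|tge].
    have tH1 : (1 <= t.+1 <= H)%N by rewrite tlt.
    have [P0 P1] := hP t tH' s a.
    apply: le_trans (ler_norm_sum _ _ _) _.
    apply: (@le_trans _ _ (\sum_s' P t s a s' * (H%:R - t%:R))).
      apply: ler_sum => s' _; apply: le_trans (ler_norm_sum _ _ _) _.
      have [pi0 pi1] := hpiT _ tH1 s'.
      have -> : P t s a s' * (H%:R - t%:R)
          = \sum_a' P t s a s' * piT t.+1 s' a' * (H%:R - t%:R).
        by rewrite -mulr_suml -mulr_sumr pi1 mulr1.
      apply: ler_sum => a' _.
      rewrite normrM [`|_ * _|]normrM (ger0_norm (P0 s')) (ger0_norm (pi0 a')).
      by rewrite ler_wpM2l ?mulr_ge0 // Qb.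
    by rewrite -mulr_suml P1 mul1r.
  have tE : t = H by apply/eqP; rewrite eqn_leq tleH tge.
  rewrite big1 ?normr0 ?tE ?subrr // => s' _; rewrite big1 // => a' _.
  by rewrite hQH mulr0.
have Yb : forall s a, `|Y t s a| <= H%:R - t%:R + 1.
  move=> s a; rewrite /Y; apply: le_trans (ler_normD _ _) _.
  have /andP[r0 r1] := hr t tH' s a.
  rewrite (ger0_norm r0); have := Wb s a; lra.
have Yfeas : ME_feasible H t (occ mu1 P piB t)
        (fun s a => r t s a + \sum_(s' : St) \sum_(a' : Ac)
                      Phat t s a s' * piT t.+1 s' a' * Qhat t.+1 s' a') (Y t).
  split; last exact: Yb.
  move=> s a hne; rewrite /Y; congr (_ + _); apply: eq_bigr => s' _.
  by apply: eq_bigr => a' _; rewrite hPhat.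
have [[QZ _] Qmin] := hME t tH'.
have hmaxQ := Qmin _ Yfeas.
pose V' := fun s' => \sum_(a' : Ac) piT t.+1 s' a' * Qhat t.+1 s' a'.
pose W := fun s a => \sum_(s' : St) \sum_(a' : Ac) P t s a s' * piT t.+1 s' a' * Qhat t.+1 s' a'.
have WE : forall s a, W s a = \sum_(s' : St) P t s a s' * V' s'.
  move=> s a; rewrite /W /V'; apply: eq_bigr => s' _; rewrite mulr_sumr.
  by apply: eq_bigr => a' _; rewrite mulrA.
have rkW : (\rank (mx_of W) <= d./2)%N.
  case: (hlr t tH') => _ [[u [w hu]]|[u [w hu]]].
  - apply: (rank_fact W _ (fun s i => \sum_(s' : St) u i s' s * V' s') (fun a i => w i a)).
    move=> s a; rewrite WE.
    transitivity (\sum_(s' : St) \sum_(i < d./2) u i s' s * w i a * V' s').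
      by apply: eq_bigr => s' _; rewrite hu mulr_suml.
    rewrite exchange_big /=; apply: eq_bigr => i _; rewrite mulr_suml.
    by apply: eq_bigr => s' _; ring.
  - apply: (rank_fact W _ (fun s i => u i s) (fun a i => \sum_(s' : St) w i s' a * V' s')).
    move=> s a; rewrite WE.
    transitivity (\sum_(s' : St) \sum_(i < d./2) u i s * w i s' a * V' s').
      by apply: eq_bigr => s' _; rewrite hu mulr_suml.
    rewrite exchange_big /=; apply: eq_bigr => i _; rewrite mulr_sumr.
    by apply: eq_bigr => s' _; ring.
have rkY : (\rank (mx_of (Y t)) <= d)%N.
  have -> : mx_of (Y t) = mx_of (r t) + mx_of W by apply/matrixP => x y; rewrite !mxE.
  apply: leq_trans (mxrank_add _ _) _.
  apply: (@leq_trans (d./2 + d./2)); first by rewrite leq_add // (hlr t tH').1.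
  by rewrite addnn -[X in (_ <= X)%N](odd_double_half d) leq_addl.
have hmaxY : maxnorm (Y t) <= Num.sqrt d%:R * H%:R.
  have B0 : 0 <= H%:R - t%:R + 1 :> R.
    have : t%:R <= H%:R :> R by rewrite ler_nat.
    lra.
  apply: le_trans (maxnorm_rank (Y t) _ B0 Yb) _.
  apply: ler_pM; [exact: sqrtr_ge0 | exact: B0 | by rewrite ler_sqrt // ler_nat |].
  have : 1 <= t%:R :> R by rewrite ler1n.
  lra.
set c0 := 2 * H%:R * (Num.sqrt d%:R * Num.sqrt #|St|%:R * Num.sqrt #|Ac|%:R).
have c0p : 0 <= c0 by rewrite /c0 !mulr_ge0 ?sqrtr_ge0.
rewrite /Dis; apply: le_mul_inf => //.
  exists (opnorm (fun s a => occ mu1 P piB t s a - occ mu1 P piT t s a)).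
  exists (occ mu1 P piB t); split; first exact: (occ_dist _ _ _ _ hmu hP hpiB _ tH').
  by split.
move=> y [g [gd [gs ->]]].
set Gf := fun s a => g s a - occ mu1 P piT t s a.
set E := fun s a => Qhat t s a - Y t s a.
have gE : \sum_s \sum_a g s a * E s a = 0.
  apply: big1 => s _; apply: big1 => a _.
  have [->|hne] := eqVneq (g s a) 0; first by rewrite mul0r.
  have hpb := gs _ _ hne.
  by rewrite /E (QZ _ _ hpb) (Yfeas.1 _ _ hpb) subrr mulr0.
have -> : \sum_s \sum_a q t s a * E s a = - \sum_s \sum_a Gf s a * E s a.
  have -> : \sum_s \sum_a Gf s a * E s a
          = \sum_s \sum_a g s a * E s a - \sum_s \sum_a q t s a * E s a.
    rewrite -sumrB; apply: eq_bigr => s _; rewrite -sumrB; apply: eq_bigr => a _.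
    by rewrite /Gf mulrBl.
  by rewrite gE sub0r opprK.
rewrite normrN.
have -> : \sum_s \sum_a Gf s a * E s a
   = \sum_s \sum_a Gf s a * Qhat t s a - \sum_s \sum_a Gf s a * Y t s a.
  rewrite -sumrB; apply: eq_bigr => s _; rewrite -sumrB; apply: eq_bigr => a _.
  by rewrite /E mulrBr.
apply: le_trans (ler_normB _ _) _.
set K := opnorm Gf * Num.sqrt #|St|%:R * Num.sqrt #|Ac|%:R.
have K0 : 0 <= K by rewrite /K !mulr_ge0 ?sqrtr_ge0 ?opnorm_ge0.
have h1 := inner_maxnorm Gf (Qhat t).
have h2 := inner_maxnorm Gf (Y t).
rewrite -/K in h1 h2.
have h1' : K * maxnorm (Qhat t) <= K * (Num.sqrt d%:R * H%:R).
  by rewrite ler_wpM2l //; apply: le_trans hmaxQ hmaxY.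
have h2' : K * maxnorm (Y t) <= K * (Num.sqrt d%:R * H%:R) by rewrite ler_wpM2l.
have -> : c0 * opnorm Gf = 2 * (K * (Num.sqrt d%:R * H%:R)) by rewrite /c0 /K; ring.
lra.
Qed.
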